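(* Let $\lambda_1,\lambda_2,\lambda_3,\lambda_4$ be non-negative integers with $\gcd(\lambda_1,\lambda_2,\lambda_3,\lambda_4)=1$, and let $h=\lambda_1+\lambda_2+\lambda_3+\lambda_4$. Then for every integer $\kappa\in\{2,\ldots,h-2\}$, $$\sum_{i=1}^4\left\{\frac{\kappa\lambda_i}{h}\right\}\in\{1,2,3\}.$$
   Context: For $q\in\mathbb{Q}$, $\lfloor q\rfloor=\max\{a\in\mathbb{Z}: a\le q\}$ and $\{q\}=q-\lfloor q\rfloor$ denotes the fractional part. *)

(* Defs.v *)
From mathcomp Require Import all_boot all_order all_algebra.
Set Implicit Arguments. Unset Strict Implicit. Unset Printing Implicit Defensive.
Import Order.TTheory GRing.Theory Num.Theory.
Local Open Scope ring_scope.

Definition fracpart (q : rat) : rat := q - (Num.floor q)%:~R.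

(* Main.v *)
Require Import Defs.
From mathcomp Require Import all_boot all_order all_algebra zify.
Import Order.TTheory GRing.Theory Num.Theory.

Local Open Scope ring_scope.

Lemma frac_nat (m h : nat) : (0 < h)%N ->
  fracpart ((m%:R : rat) / h%:R) = (m %% h)%N%:R / h%:R.
Proof.
move=> hp.
have hne : (h%:R : rat) != 0 by rewrite pnatr_eq0 -lt0n.
have E : (m%:R : rat) / h%:R = (m %% h)%N%:R / h%:R + (m %/ h)%N%:~R.
  rewrite {1}(divn_eq m h) natrD natrM mulrDl mulfK // addrC.
  by rewrite -[X in _ = _ + X]pmulrn.
have F0 : Num.floor ((m %% h)%N%:R / h%:R : rat) = 0.
  apply: floor_def; rewrite add0r /= mulr0z divr_ge0 ?ler0n //=.
  by rewrite ltr_pdivrMr ?ltr0n // mul1r ltr_nat ltn_pmod.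
rewrite /fracpart E floorDrz ?intr_int // F0 add0r.
by rewrite intrKfloor addrK.
Qed.

Theorem lemma2p3 (lam : 'I_4 -> nat) (kappa : nat) :
  (\big[gcdn/0%N]_(i < 4) lam i)%N = 1%N ->
  let h := (\sum_(i < 4) lam i)%N in
  (2 <= kappa)%N -> (kappa <= h - 2)%N ->
  ((\sum_(i < 4) fracpart (((kappa * lam i)%:R : rat) / h%:R) : rat) \in
     [:: 1; 2; 3])%R.
Proof.
move=> Hg h H2 Hk.
have hp : (0 < h)%N by rewrite lt0n; apply/eqP => E; rewrite E in Hk; lia.
have kh : (kappa < h)%N by lia.
have hne : (h%:R : rat) != 0 by rewrite pnatr_eq0 -lt0n.
under eq_bigr => i _ do rewrite frac_nat //.
rewrite -mulr_suml -natr_sum.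
set S := (\sum_(i < 4) (kappa * lam i %% h))%N.
have dS : (h %| S)%N.
  by rewrite /dvdn /S modn_summ -big_distrr /= modnMl.
have Slt : (S < 4 * h)%N.
  rewrite /S !big_ord_recl big_ord0 /=.
  have := ltn_pmod (kappa * lam ord0) hp.
  have := ltn_pmod (kappa * lam (lift ord0 ord0)) hp.
  have := ltn_pmod (kappa * lam (lift ord0 (lift ord0 ord0))) hp.
  have := ltn_pmod (kappa * lam (lift ord0 (lift ord0 (lift ord0 ord0)))) hp.
  lia.
have S0 : S != 0%N.
  apply/eqP => S0.
  have Hall : forall i : 'I_4, (h %| kappa * lam i)%N.
    move=> i; apply/eqP; apply/eqP; rewrite /dvdn; apply/eqP.
    have : (kappa * lam i %% h <= S)%N.
      by rewrite /S (bigD1 i) //= leq_addr.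
    by rewrite S0 leqn0 => /eqP.
  have : (h %| kappa)%N.
    move: Hg; rewrite !big_ord_recl big_ord0 gcdn0 => Hg.
    have -> : kappa = (kappa * 1)%N by rewrite muln1.
    rewrite -Hg !muln_gcdr !dvdn_gcd !Hall.
    done.
  move/(dvdn_leq _); case: (kappa) H2 kh => // k _ kh /(_ isT); lia.
case/dvdnP: dS => n En.
rewrite En natrM mulfK //.
have : (0 < n < 4)%N.
  apply/andP; split; last by move: Slt; rewrite En ltn_pmul2r.
  by rewrite lt0n; apply: contra S0; rewrite En => /eqP ->.
by case: n {En} => [|[|[|[|]]]].
Qed.
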